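(* Fix an epoch $t$ and a parameter vector $\theta^t\in\mathbb{R}^P$. Assume there are constants $\kappa_l>0$, $l\in\mathcal{L}$, such that $\|\nabla_l f(\theta^t)-\nabla_l f_i(\theta^t)\|^2\le\kappa_l^2$ for all $i\in\mathcal{N}$ and $l\in\mathcal{L}$. Then $$\mathcal{E}_t:=\Big\|\nabla f(\theta^t)-\sum_{l\in\mathcal{L}_t}\nabla_l h_l^t(\theta^t)\Big\|^2 \le 2\,\mathcal{E}_{t,1}+2\,\mathcal{E}_{t,2},$$ where $\mathcal{E}_{t,1}=\big\|\sum_{l\notin\mathcal{L}_t}\nabla_l f(\theta^t)\big\|^2$ and $\mathcal{E}_{t,2}=\sum_{l\in\mathcal{L}_t}\chi_{\mathbf{w}_{t,l}\|\alpha}\,\kappa_l^2$ with $\chi_{\mathbf{w}_{t,l}\|\alpha}=\sum_{i\in\mathcal{N}}\frac{(w_{i,l}^t-\alpha_i)^2}{\alpha_i}$.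
   Context: There are $N$ clients $\mathcal{N}=\{1,\dots,N\}$; client $i$ has $d_i>0$ samples and local objective $f_i:\mathbb{R}^P\to\mathbb{R}$ (differentiable). Let $\alpha_i=d_i/\sum_{j=1}^N d_j$ and $f=\sum_{i=1}^N\alpha_i f_i$. The parameter vector $\theta\in\mathbb{R}^P$ is partitioned into $L$ layers (blocks) indexed by $\mathcal{L}=\{1,\dots,L\}$; $\nabla_l F(\theta)$ denotes the gradient of $F$ with respect to the block of layer $l$, viewed as a vector of $\mathbb{R}^P$ with zeros outside that block. In epoch $t$, a set $\mathcal{S}^t\subseteq\mathcal{N}$ of clients participates, each $i\in\mathcal{S}^t$ has a selected layer set $\mathcal{L}_i^t\subseteq\mathcal{L}$, and $\mathcal{L}_t=\bigcup_{i\in\mathcal{S}^t}\mathcal{L}_i^t$. Weights: $w_{i,l}^t=d_i/\sum_{j\in\mathcal{S}^t:\,l\in\mathcal{L}_j^t}d_j$ if $i\in\mathcal{S}^t$ and $l\in\mathcal{L}_i^t$, and $w_{i,l}^t=0$ otherwise (for all $i\in\mathcal{N}$). Surrogate objective: $h_l^t(\theta)=\sum_{i\in\mathcal{S}^t}w_{i,l}^t f_i(\theta)$. *)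

(* Defs.v *)
From HB Require Import structures.
From mathcomp Require Import all_boot all_order all_algebra.
From mathcomp Require Import all_classical all_reals all_analysis.
Set Implicit Arguments. Unset Strict Implicit. Unset Printing Implicit Defensive.
Import Order.TTheory GRing.Theory Num.Theory.
Import numFieldNormedType.Exports.
Local Open Scope ring_scope.

Section FL.
Variable R : realType.

Definition sqnorm (P : nat) (v : 'rV[R]_P) : R := \sum_(j < P) (v ord0 j) ^+ 2.

Definition grad (P : nat) (F : 'rV[R]_P -> R) (x : 'rV[R]_P) : 'rV[R]_P :=
  \row_(j < P) ('d F x : 'rV[R]_P -> R) (delta_mx ord0 j).

(* Block gradient nabla_l F(x): the gradient restricted to the coordinates
   of layer l (blk j = layer of coordinate j), zero elsewhere. *)
Definition grad_blk (P L : nat) (blk : 'I_P -> 'I_L) (l : 'I_L)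
  (F : 'rV[R]_P -> R) (x : 'rV[R]_P) : 'rV[R]_P :=
  \row_(j < P) (if blk j == l then grad F x ord0 j else 0).

Definition alpha (N : nat) (d : 'I_N -> nat) (i : 'I_N) : R :=
  (d i)%:R / (\sum_(j < N) (d j)%:R).

Definition fglob (P N : nat) (d : 'I_N -> nat) (f : 'I_N -> 'rV[R]_P -> R)
  : 'rV[R]_P -> R := fun x => \sum_(i < N) alpha d i * f i x.

Definition weight (N L : nat) (d : 'I_N -> nat) (S : {set 'I_N})
  (Ls : 'I_N -> {set 'I_L}) (i : 'I_N) (l : 'I_L) : R :=
  if (i \in S) && (l \in Ls i)
  then (d i)%:R / (\sum_(j in S | l \in Ls j) (d j)%:R)
  else 0.

Definition hsur (P N L : nat) (d : 'I_N -> nat) (S : {set 'I_N})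
  (Ls : 'I_N -> {set 'I_L}) (f : 'I_N -> 'rV[R]_P -> R) (l : 'I_L)
  : 'rV[R]_P -> R := fun x => \sum_(i in S) weight d S Ls i l * f i x.

Definition Lunion (N L : nat) (S : {set 'I_N}) (Ls : 'I_N -> {set 'I_L})
  : {set 'I_L} := \bigcup_(i in S) Ls i.

Definition chi2 (N L : nat) (d : 'I_N -> nat) (S : {set 'I_N})
  (Ls : 'I_N -> {set 'I_L}) (l : 'I_L) : R :=
  \sum_(i < N) (weight d S Ls i l - alpha d i) ^+ 2 / alpha d i.

End FL.
Arguments chi2 {R N L} d S Ls l.
Arguments alpha {R N} d i.
Arguments weight {R N L} d S Ls i l.

(* Main.v *)
Require Import Defs.
From HB Require Import structures.
From mathcomp Require Import all_boot all_order all_algebra.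
From mathcomp Require Import all_classical all_reals all_analysis.
From mathcomp Require Import ring lra.
Import Order.TTheory GRing.Theory Num.Theory.
Import numFieldNormedType.Exports.
Local Open Scope ring_scope.

Lemma is_diff_lc (R : realType) (P : nat) (I : Type) (r : seq I) (c : I -> R)
  (g : I -> 'rV[R]_P -> R) (x : 'rV[R]_P) :
  (forall i, differentiable (g i) x) ->
  is_diff x (fun y => \sum_(i <- r) c i * g i y)
     (fun v => \sum_(i <- r) c i * ('d (g i) x : 'rV[R]_P -> R) v).
Proof.
move=> hg; elim: r => [|a r IH].
  apply: is_diff_eq; last first.
    by apply/funext => v /=; rewrite big_nil.
  have -> : (fun y : 'rV[R]_P => \sum_(i <- [::]) c i * g i y) = cst 0.
    by apply/funext => y; rewrite big_nil.
  exact: is_diff_cst.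
have -> : (fun y => \sum_(i <- a :: r) c i * g i y) =
   (c a *: g a) + (fun y => \sum_(i <- r) c i * g i y).
  by apply/funext => y; rewrite big_cons.
have ha : is_diff x (g a) ('d (g a) x) by exact: differentiableP.
apply: is_diff_eq.
by apply/funext => v /=; rewrite big_cons.
Qed.

Lemma cs (R : realType) (N : nat) (a c v : 'I_N -> R) :
  (forall i, 0 < a i) ->
  (\sum_i c i * v i) ^+ 2 <= (\sum_i c i ^+ 2 / a i) * (\sum_i a i * v i ^+ 2).
Proof.
move=> ha.
set t := \sum_i c i * v i; set A := \sum_i c i ^+ 2 / a i; set B := \sum_i a i * v i ^+ 2.
have B0 : 0 <= B by apply: sumr_ge0 => i _; apply: mulr_ge0; [exact: ltW|exact: sqr_ge0].
have A0 : 0 <= A by apply: sumr_ge0 => i _; apply: divr_ge0; [exact: sqr_ge0|exact: ltW].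
have [Bz|Bp] := eqVneq B 0.
  have hv : forall i, v i = 0.
    move=> i; have := Bz; rewrite /B => /eqP; rewrite psumr_eq0; last first.
      by move=> k _; apply: mulr_ge0; [exact: ltW|exact: sqr_ge0].
    move/allP => /(_ i (mem_index_enum i)) /=; rewrite mulf_eq0 sqrf_eq0.
    by rewrite gt_eqF //= => /eqP.
  have -> : t = 0 by rewrite /t big1 // => i _; rewrite hv mulr0.
  by rewrite expr0n /= mulr_ge0.
have Bp' : 0 < B by rewrite lt_def Bp B0.
pose lam := t / B.
have H : 0 <= \sum_i (c i - lam * a i * v i) ^+ 2 / a i.
  by apply: sumr_ge0 => i _; apply: divr_ge0; [exact: sqr_ge0|exact: ltW].
have E : \sum_i (c i - lam * a i * v i) ^+ 2 / a i = A - 2 * lam * t + lam ^+ 2 * B.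
  rewrite /A /t /B mulr_sumr mulr_sumr -sumrB -big_split /=.
  apply: eq_bigr => i _; have := ha i; rewrite lt0r => /andP [/= ai _].
  by field.
rewrite E /lam in H.
have : 0 <= (A - 2 * (t / B) * t + (t / B) ^+ 2 * B) * B by apply: mulr_ge0.
have -> : (A - 2 * (t / B) * t + (t / B) ^+ 2 * B) * B = A * B - t ^+ 2 by field.
by rewrite subr_ge0.
Qed.

Lemma sum_if_eq (R : realType) (L : nat) (A : {set 'I_L}) (b : 'I_L) (F : 'I_L -> R) :
  \sum_(l in A) (if b == l then F l else 0) = if b \in A then F b else 0.
Proof.
case: ifP => hb.
  rewrite (bigD1 b) //= eqxx big1 ?addr0 // => l /andP [_ hl].
  by rewrite eq_sym (negbTE hl).
rewrite big1 // => l hl; case: eqP => // e; by rewrite e hl in hb.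
Qed.

Theorem lemma2 (R : realType) (P N L : nat) (blk : 'I_P -> 'I_L)
  (d : 'I_N -> nat) (hd : forall i, (0 < d i)%N)
  (f : 'I_N -> 'rV[R]_P -> R)
  (hdiff : forall i (x : 'rV[R]_P), differentiable (f i) x)
  (S : {set 'I_N}) (Ls : 'I_N -> {set 'I_L})
  (theta : 'rV[R]_P) (kappa : 'I_L -> R) (hkappa : forall l, 0 < kappa l)
  (hbound : forall (i : 'I_N) (l : 'I_L),
     sqnorm (grad_blk blk l (fglob d f) theta - grad_blk blk l (f i) theta)
       <= kappa l ^+ 2) :
  sqnorm (grad (fglob d f) theta
          - \sum_(l in Lunion S Ls) grad_blk blk l (hsur d S Ls f l) theta)
  <= 2 * sqnorm (\sum_(l in ~: Lunion S Ls) grad_blk blk l (fglob d f) theta)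
     + 2 * (\sum_(l in Lunion S Ls) chi2 d S Ls l * kappa l ^+ 2).
Proof.
set G := fun i j => grad (f i) theta ord0 j.
set gf := fun j => grad (fglob d f) theta ord0 j.
set hs := fun l j => grad (hsur d S Ls f l) theta ord0 j.
set Lt := Lunion S Ls.
have gF : forall j, gf j = \sum_i alpha d i * G i j.
  move=> j; rewrite /gf /G /grad mxE.
  have Hd : is_diff theta (fglob d f)
     (fun v => \sum_(i <- index_enum 'I_N) alpha d i * ('d (f i) theta : 'rV[R]_P -> R) v).
    exact: is_diff_lc.
  rewrite diff_val; apply: eq_bigr => i _; by rewrite mxE.
have gH : forall l j, hs l j = \sum_i weight d S Ls i l * G i j.
  move=> l j; rewrite /hs /G /grad mxE.
  have -> : hsur d S Ls f l = (fun y => \sum_(i <- index_enum 'I_N) weight d S Ls i l * f i y).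
    apply/funext => y; rewrite /hsur big_mkcond; apply: eq_bigr => i _.
    by case: ifP => // hi; rewrite /weight hi /= mul0r.
  have Hd : is_diff theta (fun y => \sum_(i <- index_enum 'I_N) weight d S Ls i l * f i y)
     (fun v => \sum_(i <- index_enum 'I_N) weight d S Ls i l * ('d (f i) theta : 'rV[R]_P -> R) v).
    exact: is_diff_lc.
  rewrite diff_val; apply: eq_bigr => i _; by rewrite mxE.
have lhsE : sqnorm (grad (fglob d f) theta
          - \sum_(l in Lt) grad_blk blk l (hsur d S Ls f l) theta)
     = \sum_j (gf j - (if blk j \in Lt then hs (blk j) j else 0)) ^+ 2.
  rewrite /sqnorm; apply: eq_bigr => j _; rewrite !mxE summxE.
  rewrite -(@sum_if_eq R _ Lt (blk j) (fun l => hs l j)); congr ((_ - _) ^+ 2).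
    by rewrite /gf /grad mxE.
  by apply: eq_bigr => l _; rewrite mxE.
have AE : sqnorm (\sum_(l in ~: Lt) grad_blk blk l (fglob d f) theta)
     = \sum_j (if blk j \in ~: Lt then gf j else 0) ^+ 2.
  rewrite /sqnorm; apply: eq_bigr => j _; rewrite summxE.
  rewrite -(@sum_if_eq R _ (~: Lt) (blk j) (fun l => gf j)); congr (_ ^+ 2).
  by apply: eq_bigr => l _; rewrite mxE.
have key : \sum_j (if blk j \in Lt then gf j - hs (blk j) j else 0) ^+ 2
    <= \sum_(l in Lt) chi2 d S Ls l * kappa l ^+ 2.
  have hb : forall i l, \sum_j (if blk j == l then (gf j - G i j) ^+ 2 else 0) <= kappa l ^+ 2.
    move=> i l; apply: le_trans (hbound i l); rewrite le_eqVlt; apply/orP; left; apply/eqP.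
    rewrite /sqnorm; apply: eq_bigr => j _; rewrite !mxE.
    case: ifP => _; last by rewrite subr0 expr0n.
    by rewrite /gf /G /grad !mxE.
  clearbody gf G hs.
  have al0 : forall i, (0 <= alpha d i :> R).
    by move=> i; rewrite /alpha divr_ge0 // sumr_ge0.
  rewrite (_ : \sum_j _ = \sum_(l in Lt) \sum_j
       (if blk j == l then (gf j - hs l j) ^+ 2 else 0)); last first.
    rewrite exchange_big /=; apply: eq_bigr => j _.
    rewrite (@sum_if_eq R _ Lt (blk j) (fun l => (gf j - hs l j) ^+ 2)).
    by case: ifP => //; rewrite expr0n.
  apply: ler_sum => l hl.
  have [i0 hi0 hli0] : exists2 i0, i0 \in S & l \in Ls i0.
    by move: hl; rewrite /Lt /Lunion => /bigcupP [i0 h1 h2]; exists i0.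
  have D0 : 0 < \sum_(j < N) ((d j)%:R : R).
    rewrite (bigD1 i0) //=; apply: ltr_wpDr; first by apply: sumr_ge0.
    by rewrite ltr0n.
  have Dl : 0 < \sum_(j in S | l \in Ls j) ((d j)%:R : R).
    rewrite (bigD1 i0) /=; last by rewrite hi0 hli0.
    apply: ltr_wpDr; first by apply: sumr_ge0.
    by rewrite ltr0n.
  have al : forall i, 0 < alpha d i :> R.
    by move=> i; rewrite /alpha divr_gt0 // ltr0n.
  have sa : \sum_i alpha d i = 1 :> R.
    by rewrite /alpha -mulr_suml mulfV // gt_eqF.
  have sw : \sum_i weight d S Ls i l = 1 :> R.
    rewrite /weight -big_mkcond /= -mulr_suml mulfV ?gt_eqF //.
  have idj : forall j, gf j - hs l j
      = \sum_i (weight d S Ls i l - alpha d i) * (gf j - G i j).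
    move=> j.
    have e1 : \sum_i alpha d i * gf j = gf j by rewrite -mulr_suml sa mul1r.
    have e2 : \sum_i weight d S Ls i l * gf j = gf j by rewrite -mulr_suml sw mul1r.
    have e3 : \sum_i (weight d S Ls i l - alpha d i) * (gf j - G i j)
       = \sum_i (weight d S Ls i l * gf j - weight d S Ls i l * G i j)
         - \sum_i (alpha d i * gf j - alpha d i * G i j).
      by rewrite -sumrB; apply: eq_bigr => i _; rewrite mulrBl !mulrBr.
    by rewrite e3 !sumrB e1 e2 -gF -gH subrr subr0.
  set chi := chi2 d S Ls l.
  have chi0 : 0 <= chi.
    by apply: sumr_ge0 => i _; apply: divr_ge0; [exact: sqr_ge0|exact: al0].
  apply: le_trans (_ : \sum_j (if blk j == l then
        chi * \sum_i alpha d i * (gf j - G i j) ^+ 2 else 0) <= _).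
    apply: ler_sum => j _; case: ifP => // _.
    by rewrite idj; apply: cs.
  have -> : \sum_j (if blk j == l then
        chi * \sum_i alpha d i * (gf j - G i j) ^+ 2 else 0)
     = chi * \sum_i alpha d i *
        \sum_j (if blk j == l then (gf j - G i j) ^+ 2 else 0).
    rewrite (eq_bigr (fun j => chi * \sum_i alpha d i *
        (if blk j == l then (gf j - G i j) ^+ 2 else 0))); last first.
      move=> j _; case: ifP => _ //; by rewrite big1 ?mulr0 // => i _; rewrite mulr0.
    rewrite -mulr_sumr exchange_big /=; congr (_ * _); apply: eq_bigr => i _.
    by rewrite mulr_sumr.
  apply: ler_wpM2l => //.
  apply: le_trans (_ : \sum_i alpha d i * kappa l ^+ 2 <= _); last first.
    by rewrite -mulr_suml sa mul1r.
  apply: ler_sum => i _; apply: ler_wpM2l => //.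
rewrite lhsE AE.
apply: le_trans (_ : \sum_j (2 * (if blk j \in ~: Lt then gf j else 0) ^+ 2
     + 2 * (if blk j \in Lt then gf j - hs (blk j) j else 0) ^+ 2) <= _).
  apply: ler_sum => j _; rewrite !inE.
  have aux : forall x : R, x ^+ 2 <= 2 * x ^+ 2.
    by move=> x; have := sqr_ge0 x; lra.
  case: (blk j \in Lt) => /=; rewrite ?subr0 ?expr0n /= ?mulr0 ?add0r ?addr0 //.
rewrite big_split /= -!mulr_sumr lerD2l ler_pM2l //.
Qed.
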